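(* Let $\|\cdot\|$ be a norm on $\mathbb{R}^{m\times d}$, $C$, $L_X(D)$, $C_X(D)$ as below, $X\in\mathbb{R}^{m\times n}$, and $\mathfrak{D}\subset\mathbb{R}^{m\times d}$. Suppose there are finite constants $L_X(\mathfrak{D})>0$ and $C_X(\mathfrak{D})\ge0$ with $\sup_{D\in\mathfrak{D}}L_X(D)\le L_X(\mathfrak{D})$ and $\sup_{D\in\mathfrak{D}}C_X(D)\le C_X(\mathfrak{D})$. Then for all $D\neq D'\in\mathfrak{D}$, $$\frac{|F_X(D')-F_X(D)|}{\|D'-D\|}\le L_X(\mathfrak{D})\Big(1+\frac{C_X(\mathfrak{D})}{L_X(\mathfrak{D})}\|D'-D\|\Big).$$
   Context: A penalty is a function $g:\mathbb{R}^d\to\mathbb{R}\cup\{+\infty\}$ with $g\ge0$, not identically $+\infty$. $\mathcal{L}_x(D,\alpha)=\tfrac12\|x-D\alpha\|_2^2+g(\alpha)$, $f_x(D)=\inf_\alpha\mathcal{L}_x(D,\alpha)$, $F_X(D)=\frac1n\sum_i f_{x_i}(D)$ for $X=[x_1,\dots,x_n]$. $\|\Delta\|_{1\to2}=\max_j\|\delta_j\|_2$. $\|\cdot\|_\star$ is the dual norm of $\|\cdot\|$ w.r.t. the Frobenius inner product, and $C>0$ is a constant with $\|\Delta\|_{1\to2}^2\le C\|\Delta\|^2$ for all $\Delta$. For $\epsilon>0$, $\mathfrak{A}_\epsilon(X,D)=\{A=[\alpha_1,\dots,\alpha_n]:\ \mathcal{L}_{x_i}(D,\alpha_i)\le f_{x_i}(D)+\epsilon\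 \forall i\}$; $L_X(D)=\inf_{\epsilon>0}\sup_{A\in\mathfrak{A}_\epsilon(X,D)}\frac1n\|(X-DA)A^\top\|_\star$ and $C_X(D)=\inf_{\epsilon>0}\sup_{A\in\mathfrak{A}_\epsilon(X,D)}\frac{C}{2n}\sum_i\|\alpha_i\|_1^2$. *)

(* Defs.v *)
From Stdlib Require Import Reals ClassicalEpsilon.
From mathcomp Require Import ssreflect ssrbool ssrfun eqtype ssrnat fintype bigop.
Open Scope R_scope.

Inductive Rbar := RFin (r : R) | p_infty | m_infty.

Definition Rbar_le (x y : Rbar) : Prop :=
  match x, y with
  | m_infty, _ => True
  | _, p_infty => True
  | RFin a, RFin b => a <= b
  | _, _ => False
  end.

Definition Rbar_plus_r (r : R) (y : Rbar) : Rbar :=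
  match y with
  | RFin b => RFin (r + b)
  | p_infty => p_infty
  | m_infty => m_infty
  end.

(* real part (used only on quantities that are finite) *)
Definition rb2r (x : Rbar) : R := match x with RFin r => r | _ => 0 end.

Definition is_lub_Rbar (E : Rbar -> Prop) (s : Rbar) : Prop :=
  (forall x, E x -> Rbar_le x s) /\
  (forall b, (forall x, E x -> Rbar_le x b) -> Rbar_le s b).
Definition is_glb_Rbar (E : Rbar -> Prop) (s : Rbar) : Prop :=
  (forall x, E x -> Rbar_le s x) /\
  (forall b, (forall x, E x -> Rbar_le b x) -> Rbar_le b s).

(* supremum / infimum in [-oo,+oo] (they always exist) *)
Definition Rbar_sup (E : Rbar -> Prop) : Rbar :=
  epsilon (inhabits m_infty) (is_lub_Rbar E).
Definition Rbar_inf (E : Rbar -> Prop) : Rbar :=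
  epsilon (inhabits p_infty) (is_glb_Rbar E).

Definition vec (k : nat) := 'I_k -> R.
Definition mat (p q : nat) := 'I_p -> 'I_q -> R.

Definition rsum {k : nat} (f : 'I_k -> R) : R := \big[Rplus/0]_(i < k) f i.

Definition mxmul {p q r : nat} (A : mat p q) (B : mat q r) : mat p r :=
  fun i j => rsum (fun l => A i l * B l j).
Definition mxsub {p q : nat} (A B : mat p q) : mat p q := fun i j => A i j - B i j.
Definition mxscale {p q : nat} (c : R) (A : mat p q) : mat p q := fun i j => c * A i j.
Definition mxadd {p q : nat} (A B : mat p q) : mat p q := fun i j => A i j + B i j.
Definition mxtr {p q : nat} (A : mat p q) : mat q p := fun i j => A j i.
Definition mxapp {p q : nat} (D : mat p q) (a : vec q) : vec p :=
  fun i => rsum (fun j => D i j * a j).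
Definition vsub {k : nat} (u v : vec k) : vec k := fun i => u i - v i.
Definition col {p q : nat} (A : mat p q) (j : 'I_q) : vec p := fun i => A i j.

Definition norm2sq {k : nat} (v : vec k) : R := rsum (fun i => v i ^ 2).
Definition norm1 {k : nat} (v : vec k) : R := rsum (fun i => Rabs (v i)).

Definition frob {p q : nat} (A B : mat p q) : R :=
  rsum (fun i => rsum (fun j => A i j * B i j)).

(* ||Delta||_{1->2} = max_j ||delta_j||_2  (0 if there are no columns) *)
Definition norm12 {p q : nat} (A : mat p q) : R :=
  \big[Rmax/0]_(j < q) sqrt (norm2sq (col A j)).

Record is_norm {p q : nat} (N : mat p q -> R) : Prop := {
  norm_nonneg : forall A, 0 <= N A;
  norm_definite : forall A, N A = 0 -> A = (fun _ _ => 0);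
  norm_homog : forall c A, N (mxscale c A) = Rabs c * N A;
  norm_triangle : forall A B, N (mxadd A B) <= N A + N B
}.

(* dual norm w.r.t. the Frobenius inner product (finite for a norm) *)
Definition dual_norm {p q : nat} (N : mat p q -> R) (M : mat p q) : R :=
  rb2r (Rbar_sup (fun v => exists Delta, N Delta <= 1 /\ v = RFin (frob M Delta))).

Section Obj.
Variables (m d : nat) (g : vec d -> Rbar).

Definition Lx (x : vec m) (D : mat m d) (a : vec d) : Rbar :=
  Rbar_plus_r (/ 2 * norm2sq (vsub x (mxapp D a))) (g a).

(* f_x(D) = inf_alpha L_x(D, alpha)  (finite under the penalty assumptions) *)
Definition fx (x : vec m) (D : mat m d) : R :=
  rb2r (Rbar_inf (fun v => exists a, v = Lx x D a)).

Variable n : nat.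

Definition FX (X : mat m n) (D : mat m d) : R :=
  / INR n * rsum (fun i => fx (col X i) D).

Definition inA (eps : R) (X : mat m n) (D : mat m d) (A : mat d n) : Prop :=
  forall i : 'I_n, Rbar_le (Lx (col X i) D (col A i)) (RFin (fx (col X i) D + eps)).

Definition LX (N : mat m d -> R) (X : mat m n) (D : mat m d) : Rbar :=
  Rbar_inf (fun v => exists eps, 0 < eps /\
    v = Rbar_sup (fun w => exists A, inA eps X D A /\
          w = RFin (/ INR n * dual_norm N (mxmul (mxsub X (mxmul D A)) (mxtr A))))).

Definition CX (C : R) (X : mat m n) (D : mat m d) : Rbar :=
  Rbar_inf (fun v => exists eps, 0 < eps /\
    v = Rbar_sup (fun w => exists A, inA eps X D A /\
          w = RFin (C / (2 * INR n) * rsum (fun i => norm1 (col A i) ^ 2)))).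

End Obj.

(* Main.v *)
Require Import Defs.
From HB Require Import structures.
From Stdlib Require Import Reals Lra Psatz ClassicalEpsilon Classical FunctionalExtensionality.
From mathcomp Require Import ssreflect ssrbool ssrfun eqtype ssrnat seq fintype bigop.
Open Scope R_scope.

Lemma Rplus_assoc' : associative Rplus. Proof. move=> *; ring. Qed.
Lemma Rplus_comm' : commutative Rplus. Proof. move=> *; ring. Qed.
Lemma Rplus_0_l' : left_id 0 Rplus. Proof. move=> *; ring. Qed.
HB.instance Definition _ := Monoid.isComLaw.Build R 0 Rplus Rplus_assoc' Rplus_comm' Rplus_0_l'.

Lemma rsum_add k (f h : 'I_k -> R) : rsum (fun i => f i + h i) = rsum f + rsum h.
Proof. by rewrite /rsum big_split. Qed.

Lemma rsum_scale k c (f : 'I_k -> R) : c * rsum f = rsum (fun i => c * f i).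
Proof. rewrite /rsum; elim/big_rec2: _ => [|i x y _ <-]; ring. Qed.

Lemma rsum_le k (f h : 'I_k -> R) : (forall i, f i <= h i) -> rsum f <= rsum h.
Proof. move=> H; rewrite /rsum; elim/big_rec2: _ => [|i x y _ Hxy]; [lra|].
 by apply Rplus_le_compat. Qed.

Lemma rsum_ext k (f h : 'I_k -> R) : (forall i, f i = h i) -> rsum f = rsum h.
Proof. move=> H; rewrite /rsum; apply: eq_bigr => i _; apply H. Qed.

Lemma rsum_swap k l (F : 'I_k -> 'I_l -> R) :
  rsum (fun i => rsum (fun j => F i j)) = rsum (fun j => rsum (fun i => F i j)).
Proof. rewrite /rsum; exact: exchange_big. Qed.

Lemma rsum_const k c : rsum (fun _ : 'I_k => c) = INR k * c.
Proof. rewrite /rsum big_const_ord; elim: k => [|k IH] /=; [lra|].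
 rewrite IH; case: k {IH} => [|k] /=; lra. Qed.

Lemma rsum_nonneg k (f : 'I_k -> R) : (forall i, 0 <= f i) -> 0 <= rsum f.
Proof. move=> H; have := @rsum_le _ (fun _ => 0) f H; rewrite rsum_const; lra. Qed.

Lemma Rbar_le_trans x y z : Rbar_le x y -> Rbar_le y z -> Rbar_le x z.
Proof. case: x; case: y; case: z => //= *; lra. Qed.

Lemma Rbar_le_total x y : ~ Rbar_le x y -> Rbar_le y x.
Proof. case: x; case: y => //= *; lra. Qed.

Lemma lub_exists (E : Rbar -> Prop) : exists s, is_lub_Rbar E s.
Proof.
case: (classic (E p_infty)) => Hp.
  exists p_infty; split; first by case.
  by move=> b Hb; apply: Hb.
case: (classic (exists r, E (RFin r))) => [[r0 Hr0]|Hne].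
  case: (classic (bound (fun r => E (RFin r)))) => Hb.
    have [l [Hl1 Hl2]] := completeness _ Hb (ex_intro _ r0 Hr0).
    exists (RFin l); split.
      by case => [r||] Hr //=; apply: Hl1.
    case => [c||] Hc //=; first by apply: Hl2 => r Hr; exact: (Hc _ Hr).
    by have := Hc _ Hr0.
  exists p_infty; split; first by case.
  case => [c||] Hc //=; last by have := Hc _ Hr0.
  by case: Hb; exists c => r Hr; exact: (Hc _ Hr).
exists m_infty; split; last by [].
case => [r||] Hr /=; [by case: Hne; exists r|by []|by []].
Qed.

Lemma sup_spec E : is_lub_Rbar E (Rbar_sup E).
Proof. rewrite /Rbar_sup; apply: epsilon_spec; exact: lub_exists. Qed.

Definition Rbar_opp x := match x with RFin r => RFin (- r) | p_infty => m_infty | m_infty => p_infty end.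
Lemma Rbar_opp_le x y : Rbar_le (Rbar_opp x) (Rbar_opp y) <-> Rbar_le y x.
Proof. case: x; case: y => //= *; split; lra. Qed.
Lemma Rbar_opp_opp x : Rbar_opp (Rbar_opp x) = x.
Proof. by case: x => //= r; rewrite Ropp_involutive. Qed.

Lemma glb_exists (E : Rbar -> Prop) : exists s, is_glb_Rbar E s.
Proof.
have [s [H1 H2]] := lub_exists (fun y => E (Rbar_opp y)).
exists (Rbar_opp s); split.
  move=> x Hx; rewrite -{1}(Rbar_opp_opp x) Rbar_opp_le; apply: H1; by rewrite Rbar_opp_opp.
move=> b Hb; rewrite -(Rbar_opp_opp b) Rbar_opp_le; apply: H2 => x Hx.
by rewrite -{1}(Rbar_opp_opp x) Rbar_opp_le; apply: Hb.
Qed.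

Lemma inf_spec E : is_glb_Rbar E (Rbar_inf E).
Proof. rewrite /Rbar_inf; apply: epsilon_spec; exact: glb_exists. Qed.

Lemma sup_ub E x : E x -> Rbar_le x (Rbar_sup E).
Proof. by case: (sup_spec E) => H _; apply H. Qed.
Lemma sup_least E b : (forall x, E x -> Rbar_le x b) -> Rbar_le (Rbar_sup E) b.
Proof. by case: (sup_spec E) => _ H; apply H. Qed.
Lemma inf_lb E x : E x -> Rbar_le (Rbar_inf E) x.
Proof. by case: (inf_spec E) => H _; apply H. Qed.
Lemma inf_greatest E b : (forall x, E x -> Rbar_le b x) -> Rbar_le b (Rbar_inf E).
Proof. by case: (inf_spec E) => _ H; apply H. Qed.

Lemma sup_finite E a B : E (RFin a) -> (forall x, E x -> Rbar_le x (RFin B)) ->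
  Rbar_sup E = RFin (rb2r (Rbar_sup E)).
Proof.
move=> Ha HB; have := sup_ub _ _ Ha; have := sup_least _ _ HB.
by case: (Rbar_sup E).
Qed.

Lemma inf_finite E a B : E (RFin a) -> (forall x, E x -> Rbar_le (RFin B) x) ->
  Rbar_inf E = RFin (rb2r (Rbar_inf E)).
Proof.
move=> Ha HB; have := inf_lb _ _ Ha; have := inf_greatest _ _ HB.
by case: (Rbar_inf E).
Qed.

Lemma inf_approx E c delta : 0 < delta -> Rbar_le (Rbar_inf E) (RFin c) ->
  exists x, E x /\ Rbar_le x (RFin (c + delta)).
Proof.
move=> Hd Hc; apply: NNPP => Hn.
have : Rbar_le (RFin (c + delta)) (Rbar_inf E).
  apply: inf_greatest => x Hx; apply: Rbar_le_total => Hx'.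
  by apply: Hn; exists x.
move=> H; have := Rbar_le_trans _ _ _ H Hc => /=; lra.
Qed.

Lemma rsum_scale_r k c (f : 'I_k -> R) : rsum f * c = rsum (fun i => f i * c).
Proof. rewrite Rmult_comm rsum_scale; apply: rsum_ext => i; ring. Qed.

Lemma sq_rsum k (a : 'I_k -> R) : (rsum a)^2 = rsum (fun j => rsum (fun l => a j * a l)).
Proof.
rewrite /= Rmult_1_r rsum_scale_r; apply: rsum_ext => j; by rewrite rsum_scale.
Qed.

Lemma norm2sq_sub k (u w : vec k) :
  norm2sq (vsub u w) = norm2sq u - 2 * rsum (fun i => u i * w i) + norm2sq w.
Proof.
rewrite /norm2sq /vsub.
have -> : rsum (fun i => (u i - w i) ^ 2) =
  rsum (fun i => (u i ^ 2 + (-2) * (u i * w i)) + w i ^ 2).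
  by apply: rsum_ext => i; ring.
rewrite rsum_add rsum_add -rsum_scale; ring.
Qed.

Lemma rsum_term k (f : 'I_k -> R) i : (forall j, 0 <= f j) -> f i <= rsum f.
Proof.
move=> H; rewrite /rsum (bigD1 i) //=.
have : 0 <= \big[Rplus/0]_(j < k | j != i) f j.
  elim/big_ind: _ => //; [lra| move=> x y; lra].
move=> Hb; rewrite -{1}(Rplus_0_r (f i)); apply: Rplus_le_compat_l; exact: Hb.
Qed.

Lemma bigmax_ge_seq (q : nat) (F : 'I_q -> R) (j : 'I_q) r :
  j \in r -> F j <= \big[Rmax/0]_(i <- r) F i.
Proof.
elim: r => [|x r IH] //.
rewrite in_cons big_cons => /orP [/eqP <-|Hr]; first exact: Rmax_l.
apply: Rle_trans (IH Hr) _; exact: Rmax_r.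
Qed.

Lemma bigmax_ge (q : nat) (F : 'I_q -> R) (j : 'I_q) : F j <= \big[Rmax/0]_(i < q) F i.
Proof. apply: bigmax_ge_seq; by rewrite mem_index_enum. Qed.

Lemma col_le_norm12 p q (A : mat p q) j : norm2sq (col A j) <= norm12 A ^ 2.
Proof.
have H := @bigmax_ge _ (fun j => sqrt (norm2sq (col A j))) j.
rewrite /norm12.
have Hn : 0 <= norm2sq (col A j) by apply: rsum_nonneg => i; apply: pow2_ge_0.
have Hs := sqrt_pos (norm2sq (col A j)).
have Hss := sqrt_sqrt _ Hn.
set M := \big[Rmax/0]_(j0 < q) sqrt (norm2sq (col A j0)) in H *.
simpl in H. nra.
Qed.

Lemma entry_le p q (A : mat p q) i j : A i j ^ 2 <= norm12 A ^ 2.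
Proof.
apply: Rle_trans (@col_le_norm12 _ _ A j).
exact: (@rsum_term _ (fun i => col A j i ^ 2) i (fun _ => pow2_ge_0 _)).
Qed.

Lemma prod_bound x y u v : x * u * (y * v) <= Rabs x * Rabs y * ((u ^ 2 + v ^ 2) / 2).
Proof.
have H1 : x * u * (y * v) <= Rabs (x * y) * Rabs (u * v).
  rewrite -Rabs_mult; apply: Rle_trans (Rle_abs _); right; ring.
have H2 : Rabs (u * v) <= (u ^ 2 + v ^ 2) / 2.
  rewrite Rabs_mult; have := Rabs_pos u; have := Rabs_pos v.
  have -> : u ^ 2 = Rabs u ^ 2 by rewrite -pow2_abs.
  have -> : v ^ 2 = Rabs v ^ 2 by rewrite -pow2_abs.
  move=> h1 h2; have := pow2_ge_0 (Rabs u - Rabs v); move=> h3; nra.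
rewrite Rabs_mult in H1.
apply: Rle_trans H1 _; apply: Rmult_le_compat_l => //; apply: Rmult_le_pos; exact: Rabs_pos.
Qed.

Lemma mxapp_bound p q (Delta : mat p q) (a : vec q) :
  norm2sq (mxapp Delta a) <= norm12 Delta ^ 2 * norm1 a ^ 2.
Proof.
set M := norm12 Delta.
rewrite /norm2sq /mxapp.
rewrite (@rsum_ext _ _ (fun k => rsum (fun j => rsum (fun l => Delta k j * a j * (Delta k l * a l)))));
  last by move=> k; rewrite sq_rsum.
apply: Rle_trans.
  apply: (@rsum_le _ _ (fun k => rsum (fun j => rsum (fun l =>
            Rabs (a j) * Rabs (a l) * ((Delta k j ^ 2 + Delta k l ^ 2) / 2))))) => k.
  apply: rsum_le => j; apply: rsum_le => l.
  have -> : Delta k j * a j * (Delta k l * a l) = a j * Delta k j * (a l * Delta k l) by ring.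
  exact: prod_bound.
rewrite rsum_swap.
rewrite (@rsum_ext _ _ (fun j => rsum (fun l => Rabs (a j) * Rabs (a l) / 2 *
   (norm2sq (col Delta j) + norm2sq (col Delta l))))); last first.
  move=> j; rewrite rsum_swap; apply: rsum_ext => l.
  rewrite /norm2sq /col -rsum_add rsum_scale; apply: rsum_ext => k; field.
rewrite /norm1 sq_rsum Rmult_comm rsum_scale_r.
apply: rsum_le => j; rewrite rsum_scale_r; apply: rsum_le => l.
have := @col_le_norm12 _ _ Delta j; have := @col_le_norm12 _ _ Delta l.
have := Rabs_pos (a j); have := Rabs_pos (a l).
rewrite -/M.
set cj := norm2sq (col Delta j); set cl := norm2sq (col Delta l).
set x := Rabs (a j); set y := Rabs (a l); move=> h1 h2 h3 h4.
have : 0 <= x * y by apply: Rmult_le_pos.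
move=> h5; nra.
Qed.

Lemma dot_sum m d n (X : mat m n) (D Delta : mat m d) (A : mat d n) :
  rsum (fun i : 'I_n => rsum (fun k => vsub (col X i) (mxapp D (col A i)) k *
                                   mxapp Delta (col A i) k))
  = frob (mxmul (mxsub X (mxmul D A)) (mxtr A)) Delta.
Proof.
rewrite /frob /mxmul /mxsub /mxtr /vsub /mxapp /col.
rewrite (@rsum_ext _ _ (fun i => rsum (fun k => rsum (fun j =>
   (X k i - rsum (fun l => D k l * A l i)) * A j i * Delta k j)))); last first.
  move=> i; apply: rsum_ext => k; rewrite rsum_scale; apply: rsum_ext => j; ring.
rewrite rsum_swap; apply: rsum_ext => k; rewrite rsum_swap; apply: rsum_ext => j.
by rewrite rsum_scale_r.
Qed.

Lemma frob_scale {p q : nat} (M Delta : mat p q) c : frob M (mxscale c Delta) = c * frob M Delta.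
Proof.
rewrite /frob /mxscale rsum_scale; apply: rsum_ext => i; rewrite rsum_scale.
apply: rsum_ext => j; ring.
Qed.

Lemma frob_zero {p q : nat} (M : mat p q) : frob M (fun _ _ => 0) = 0.
Proof.
rewrite /frob (@rsum_ext _ _ (fun _ => 0)) ?rsum_const; first ring.
move=> i; rewrite (@rsum_ext _ _ (fun _ => 0)) ?rsum_const; first ring.
move=> j; ring.
Qed.

Section Dual.
Variables (m d : nat) (N : mat m d -> R) (HN : is_norm N) (C : R) (HC : 0 < C)
  (HCN : forall Delta : mat m d, norm12 Delta ^ 2 <= C * N Delta ^ 2).

Lemma N_zero : N (fun _ _ => 0) = 0.
Proof.
have -> : (fun _ _ => 0) = mxscale 0 (fun (_ : 'I_m) (_ : 'I_d) => 0).
  by rewrite /mxscale; apply: functional_extensionality => i;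
     apply: functional_extensionality => j; ring.
rewrite (norm_homog _ HN) Rabs_R0; ring.
Qed.

Lemma dual_bound (M : mat m d) Delta : frob M Delta <= dual_norm N M * N Delta.
Proof.
set E := (fun v => exists Delta, N Delta <= 1 /\ v = RFin (frob M Delta)).
set B := rsum (fun i => rsum (fun j => (M i j ^ 2 + C) / 2)).
have HE0 : E (RFin 0).
  exists (fun _ _ => 0); rewrite N_zero frob_zero; split => //; lra.
have HEB : forall x, E x -> Rbar_le x (RFin B).
  move=> x [D0 [HD0 ->]] /=; rewrite /frob /B; apply: rsum_le => i; apply: rsum_le => j.
  have h1 := @entry_le _ _ D0 i j.
  have h2 := HCN D0.
  have h3 := norm_nonneg _ HN D0.
  have h6 : N D0 ^ 2 <= 1 by nra.
  have h4 : norm12 D0 ^ 2 <= C by nra.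
  have h5 := pow2_ge_0 (M i j - D0 i j).
  nra.
have Hfin := sup_finite _ _ _ HE0 HEB.
have Hub : forall D0, N D0 <= 1 -> frob M D0 <= dual_norm N M.
  move=> D0 HD0; have := sup_ub E (RFin (frob M D0)) (ex_intro _ D0 (conj HD0 erefl)).
  by rewrite /dual_norm -/E Hfin.
have Hd0 : 0 <= dual_norm N M.
  have := Hub (fun _ _ => 0); rewrite N_zero frob_zero; move=> H; apply: H; lra.
case: (Req_dec (N Delta) 0) => HD.
  have -> := norm_definite _ HN _ HD; rewrite frob_zero N_zero; lra.
have Hpos : 0 < N Delta by have := norm_nonneg _ HN Delta; lra.
have := Hub (mxscale (/ N Delta) Delta).
rewrite (norm_homog _ HN) frob_scale Rabs_right; last by left; apply: Rinv_0_lt_compat.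
rewrite Rinv_l; last lra.
move=> H; have := H (Rle_refl 1).
move=> H2; apply (Rmult_le_reg_l (/ N Delta)); first by apply: Rinv_0_lt_compat.
apply: Rle_trans H2 _; right; field; lra.
Qed.
End Dual.

Lemma mxapp_sub {p q : nat} (D' D : mat p q) (a : vec q) k :
  mxapp (mxsub D' D) a k = mxapp D' a k - mxapp D a k.
Proof.
rewrite /mxapp /mxsub.
rewrite (@rsum_ext _ _ (fun j => D' k j * a j + (-1) * (D k j * a j))); last by move=> j; ring.
rewrite rsum_add -rsum_scale; ring.
Qed.

Lemma norm2sq_nonneg {k : nat} (v : vec k) : 0 <= norm2sq v.
Proof. apply: rsum_nonneg => i; exact: pow2_ge_0. Qed.

Section Main.
Variables (m d : nat) (g : vec d -> Rbar) (Hg0 : forall a, Rbar_le (RFin 0) (g a))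
  (Hg1 : exists a, g a <> p_infty).

Lemma g_fin a : g a <> p_infty -> exists r, g a = RFin r.
Proof. have := Hg0 a; case: (g a) => //; by eauto. Qed.

Lemma Lx_nonneg x D a : Rbar_le (RFin 0) (Lx m d g x D a).
Proof.
rewrite /Lx; have := Hg0 a; have := norm2sq_nonneg (vsub x (mxapp D a)).
case: (g a) => //= r h1 h2; lra.
Qed.

Lemma fx_fin x D : Rbar_inf (fun v => exists a, v = Lx m d g x D a) = RFin (fx m d g x D).
Proof.
case: Hg1 => a0 Ha0; have [r0 Hr0] := g_fin a0 Ha0.
rewrite /fx; apply: (inf_finite _ (/ 2 * norm2sq (vsub x (mxapp D a0)) + r0) 0).
  by exists a0; rewrite /Lx Hr0.
by move=> v [a ->]; apply: Lx_nonneg.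
Qed.

Lemma fx_low x D a : Rbar_le (RFin (fx m d g x D)) (Lx m d g x D a).
Proof. rewrite -fx_fin; apply: inf_lb; by exists a. Qed.

Lemma fx_eps x D eps : 0 < eps -> exists a, Rbar_le (Lx m d g x D a) (RFin (fx m d g x D + eps)).
Proof.
move=> He; have [v [[a ->] H]] := inf_approx (fun v => exists a, v = Lx m d g x D a) (fx m d g x D) eps He
   (ltac:(rewrite fx_fin /=; lra)).
by exists a.
Qed.

Lemma sample x D D' a eps : Rbar_le (Lx m d g x D a) (RFin (fx m d g x D + eps)) ->
  fx m d g x D' <= fx m d g x D + eps
     - rsum (fun k => vsub x (mxapp D a) k * mxapp (mxsub D' D) a k)
     + / 2 * (norm12 (mxsub D' D) ^ 2 * norm1 a ^ 2).
Proof.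
move=> H; have Hl := fx_low x D' a.
have Heq : norm2sq (vsub x (mxapp D' a)) =
    norm2sq (vsub (vsub x (mxapp D a)) (mxapp (mxsub D' D) a)).
  rewrite /norm2sq; apply: rsum_ext => k; rewrite /vsub mxapp_sub; ring.
rewrite [X in _ = X]norm2sq_sub in Heq.
have Hb := @mxapp_bound _ _ (mxsub D' D) a.
move: H Hl Hb; rewrite /Lx Heq.
have := Hg0 a; case: (g a) => //= r _.
set A1 := norm2sq (vsub x (mxapp D a)).
set A2 := rsum _. set A3 := norm2sq _. set A4 := norm12 _. set A5 := norm1 a.
set F1 := fx m d g x D. set F2 := fx m d g x D'.
move=> h1 h2 h3. lra.
Qed.

End Main.

Lemma limit_arg x L K a : 0 <= a ->
  (forall delta, 0 < delta -> x <= delta + (L + delta) * a + (K + delta) * a ^ 2) ->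
  x <= L * a + K * a ^ 2.
Proof.
move=> Ha H; apply: Rnot_lt_le => Hx.
set e := x - (L * a + K * a ^ 2).
have He : 0 < e by rewrite /e; lra.
have Hq : 0 < 1 + a + a ^ 2 by have := pow2_ge_0 a; move=> h; lra.
set dl := e / (2 * (1 + a + a ^ 2)).
have Hdl : 0 < dl by rewrite /dl; apply: Rdiv_lt_0_compat => //; lra.
have := H dl Hdl.
have -> : dl + (L + dl) * a + (K + dl) * a ^ 2 = L * a + K * a ^ 2 + dl * (1 + a + a ^ 2) by ring.
have -> : dl * (1 + a + a ^ 2) = e / 2 by rewrite /dl; field; lra.
rewrite /e; lra.
Qed.

Section Main2.
Variables (m d n : nat) (Hn : (0 < n)%nat)
  (N : mat m d -> R) (HN : is_norm N)
  (C : R) (HC : 0 < C) (HCN : forall Delta : mat m d, norm12 Delta ^ 2 <= C * N Delta ^ 2)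
  (g : vec d -> Rbar) (Hg0 : forall a, Rbar_le (RFin 0) (g a))
  (Hg1 : exists a, g a <> p_infty)
  (X : mat m n) (LD CD : R).

Lemma inA_mono e1 e2 D A : e1 <= e2 -> inA m d g n e1 X D A -> inA m d g n e2 X D A.
Proof.
move=> He H i; apply: Rbar_le_trans (H i) _ => /=; lra.
Qed.

Lemma one_side D1 D2 delta : 0 < delta ->
  Rbar_le (LX m d g n N X D1) (RFin LD) -> Rbar_le (CX m d g n C X D1) (RFin CD) ->
  FX m d g n X D2 - FX m d g n X D1 <=
    delta + (LD + delta) * N (mxsub D2 D1) + (CD + delta) * N (mxsub D2 D1) ^ 2.
Proof.
move=> Hd HL HC1.
have [v1 [[e1 [He1 ->]] Hs1]] := inf_approx _ _ _ Hd HL.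
have [v2 [[e2 [He2 ->]] Hs2]] := inf_approx _ _ _ Hd HC1.
set eps := Rmin (Rmin e1 e2) delta.
have Heps : 0 < eps by rewrite /eps; repeat apply: Rmin_pos.
have Heps1 : eps <= e1 by rewrite /eps; apply: Rle_trans (Rmin_l _ _) (Rmin_l _ _).
have Heps2 : eps <= e2 by rewrite /eps; apply: Rle_trans (Rmin_l _ _) (Rmin_r _ _).
have Hepsd : eps <= delta by rewrite /eps; apply: Rmin_r.
pose P i a := Rbar_le (Lx m d g (col X i) D1 a) (RFin (fx m d g (col X i) D1 + eps)).
pose f i := epsilon (inhabits (fun _ : 'I_d => 0)) (P i).
have Hf : forall i, P i (f i).
  move=> i; apply: epsilon_spec; exact: (fx_eps m d g Hg0 Hg1 (col X i) D1 eps Heps).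
pose A : mat d n := fun j i => f i j.
have HA : forall e', eps <= e' -> inA m d g n e' X D1 A.
  move=> e' he i; apply: Rbar_le_trans (Hf i) _ => /=; lra.
set G := mxmul (mxsub X (mxmul D1 A)) (mxtr A).
have HLb : / INR n * dual_norm N G <= LD + delta.
  have := sup_ub (fun w => exists A, inA m d g n e1 X D1 A /\
          w = RFin (/ INR n * dual_norm N (mxmul (mxsub X (mxmul D1 A)) (mxtr A))))
      _ (ex_intro _ A (conj (HA e1 Heps1) erefl)).
  by move=> H; have := Rbar_le_trans _ _ _ H Hs1.
set T := rsum (fun i => norm1 (col A i) ^ 2).
have HCb : C / (2 * INR n) * T <= CD + delta.
  have := sup_ub (fun w => exists A, inA m d g n e2 X D1 A /\
          w = RFin (C / (2 * INR n) * rsum (fun i => norm1 (col A i) ^ 2)))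
      _ (ex_intro _ A (conj (HA e2 Heps2) erefl)).
  by move=> H; have := Rbar_le_trans _ _ _ H Hs2.
set Dl := mxsub D2 D1.
set M := norm12 Dl.
have Hsum : rsum (fun i => fx m d g (col X i) D2) <=
   rsum (fun i => fx m d g (col X i) D1 + (eps + ((-1) * rsum (fun k =>
      vsub (col X i) (mxapp D1 (col A i)) k * mxapp Dl (col A i) k) +
      (/ 2 * M ^ 2) * norm1 (col A i) ^ 2))).
  apply: rsum_le => i.
  have := sample m d g Hg0 Hg1 (col X i) D1 D2 (col A i) eps (Hf i).
  rewrite -/Dl -/M.
  set a1 := rsum _. set a2 := norm1 _. move=> h; nra.
rewrite rsum_add rsum_add rsum_const rsum_add -rsum_scale -rsum_scale dot_sum -/G -/T in Hsum.
have hdual : - frob G Dl <= dual_norm N G * N Dl.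
  have := dual_bound m d N HN C HC HCN G (mxscale (-1) Dl).
  by rewrite frob_scale (norm_homog _ HN) Rabs_Ropp Rabs_R1; move=> h; lra.
have hM : M ^ 2 <= C * N Dl ^ 2 by exact: HCN.
have hT : 0 <= T by apply: rsum_nonneg => i; exact: pow2_ge_0.
have ha : 0 <= N Dl by exact: norm_nonneg _ HN Dl.
have hn : 0 < INR n by apply: lt_0_INR; apply/ltP.
rewrite /FX.
set S2 := rsum (fun i => fx m d g (col X i) D2) in Hsum *.
set S1 := rsum (fun i => fx m d g (col X i) D1) in Hsum *.
set du := dual_norm N G in HLb hdual.
set fr := frob G Dl in Hsum hdual.
set a := N Dl in hdual hM ha *.
set ni := / INR n in HLb *.
have hni : 0 < ni by apply: Rinv_0_lt_compat.
have e1' : ni * (S2 - S1) <= ni * (INR n * eps + (-1 * fr + / 2 * M ^ 2 * T)).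
  apply: Rmult_le_compat_l; lra.
have e2' : ni * (INR n * eps) = eps by rewrite /ni; field; lra.
have e3' : ni * (- fr) <= (LD + delta) * a.
  have : ni * (- fr) <= ni * (du * a) by apply: Rmult_le_compat_l; lra.
  have : ni * du * a <= (LD + delta) * a by apply: Rmult_le_compat_r.
  move=> h1 h2; lra.
have e4' : ni * (/ 2 * M ^ 2 * T) <= (CD + delta) * a ^ 2.
  have : ni * (/ 2 * M ^ 2 * T) <= (C / (2 * INR n) * T) * a ^ 2.
    have -> : C / (2 * INR n) * T * a ^ 2 = ni * (/ 2 * (C * a ^ 2) * T) by rewrite /ni; field; lra.
    apply: Rmult_le_compat_l; first lra.
    apply: Rmult_le_compat_r => //; lra.
  have : C / (2 * INR n) * T * a ^ 2 <= (CD + delta) * a ^ 2.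
    apply: Rmult_le_compat_r => //; exact: pow2_ge_0.
  move=> h1 h2; lra.
have -> : ni * S2 - ni * S1 = ni * (S2 - S1) by ring.
have E : ni * (INR n * eps + (-1 * fr + / 2 * M ^ 2 * T)) =
   ni * (INR n * eps) + ni * (- fr) + ni * (/ 2 * M ^ 2 * T) by ring.
rewrite E in e1'.
lra.
Qed.

End Main2.

Theorem mainTheorem4
  (m d n : nat) (Hn : (0 < n)%nat)
  (N : mat m d -> R) (HN : is_norm N)
  (C : R) (HC : 0 < C) (HCN : forall Delta : mat m d, norm12 Delta ^ 2 <= C * N Delta ^ 2)
  (g : vec d -> Rbar) (Hg0 : forall a, Rbar_le (RFin 0) (g a))
  (Hg1 : exists a, g a <> p_infty)
  (X : mat m n) (Dset : mat m d -> Prop) (LD CD : R) (HLD : 0 < LD) (HCD : 0 <= CD)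
  (HL : Rbar_le (Rbar_sup (fun v => exists D, Dset D /\ v = LX m d g n N X D)) (RFin LD))
  (HCc : Rbar_le (Rbar_sup (fun v => exists D, Dset D /\ v = CX m d g n C X D)) (RFin CD))
  (D D' : mat m d) (HD : Dset D) (HD' : Dset D') (Hne : D <> D') :
  Rabs (FX m d g n X D' - FX m d g n X D) / N (mxsub D' D)
    <= LD * (1 + CD / LD * N (mxsub D' D)).
Proof.
have HL1 : forall D0, Dset D0 -> Rbar_le (LX m d g n N X D0) (RFin LD).
  move=> D0 HD0; apply: Rbar_le_trans HL.
  apply: sup_ub; by exists D0.
have HC1 : forall D0, Dset D0 -> Rbar_le (CX m d g n C X D0) (RFin CD).
  move=> D0 HD0; apply: Rbar_le_trans HCc.
  apply: sup_ub; by exists D0.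
have side : forall D1 D2, Dset D1 -> Dset D2 ->
    FX m d g n X D2 - FX m d g n X D1 <= LD * N (mxsub D2 D1) + CD * N (mxsub D2 D1) ^ 2.
  move=> D1 D2 H1 H2; apply: limit_arg; first exact: norm_nonneg _ HN _.
  move=> dl Hdl; exact: (one_side m d n Hn N HN C HC HCN g Hg0 Hg1 X LD CD D1 D2 dl Hdl (HL1 _ H1) (HC1 _ H1)).
have Hsym : N (mxsub D D') = N (mxsub D' D).
  have -> : mxsub D D' = mxscale (-1) (mxsub D' D).
    apply: functional_extensionality => i; apply: functional_extensionality => j.
    rewrite /mxsub /mxscale; ring.
  by rewrite (norm_homog _ HN) Rabs_Ropp Rabs_R1 Rmult_1_l.
have s1 := side D D' HD HD'.
have s2 := side D' D HD' HD.
rewrite Hsym in s2.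
set a := N (mxsub D' D) in s1 s2 *.
have ha : 0 < a.
  have := norm_nonneg _ HN (mxsub D' D); rewrite -/a => h.
  case: (Req_dec a 0) => h0; last lra.
  have Hz := norm_definite _ HN _ h0.
  case: Hne; apply: functional_extensionality => i; apply: functional_extensionality => j.
  have := f_equal (fun F => F i j) Hz; rewrite /mxsub /= => e; lra.
have Habs : Rabs (FX m d g n X D' - FX m d g n X D) <= LD * a + CD * a ^ 2.
  unfold Rabs; case: Rcase_abs => _; lra.
have -> : LD * (1 + CD / LD * a) = (LD * a + CD * a ^ 2) / a by field; lra.
apply: Rmult_le_compat_r => //; left; exact: Rinv_0_lt_compat.
Qed.
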